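(* Let $G$ be a mixed graph without directed cycles with maxrank $\Lambda=\Lambda(G)$, and for $i=0,\dots,\Lambda$ let $L_i$ be the set of vertices of inrank $i$. Then $\chi(G)\le\sum_{i=0}^{\Lambda}\chi_{\mathrm u}(G[L_i])$, where $\chi_{\mathrm u}(G[L_i])$ is the chromatic number of the undirected graph $G[L_i]$ (which contains no arcs). Moreover, the bound is tight: for all integers $\ell,k\ge1$ there is a mixed graph $G$ with $\Lambda(G)=\ell$, $\chi_{\mathrm u}(G[L_i])=k$ for every $i\in\{0,\dots,\ell\}$, and $\chi(G)=(\ell+1)k$.
   Context: A mixed graph $G$ consists of a finite vertex set $V(G)$, a set $E(G)$ of undirected edges and a set $A(G)$ of directed arcs; it is simple and contains no directed cycle. A $k$-coloring $c\colon V(G)\to\{1,\dots,k\}$ is proper if $c(u)\neq c(v)$ for every edge $\{u,v\}$ and $c(u)<c(v)$ for every arc $(u,v)$; $\chi(G)$ is the minimum such $k$. The maxrank $\Lambda(G)$ is the number of arcs on a longest directed path in $G$; the inrank of a vertex $v$ is the number of arcs on a longest directed path ending at $v$. $G[L]$ is the mixed subgraph induced by $L$. *)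

(* Defs.v *)
From mathcomp Require Import all_boot.
Set Implicit Arguments. Unset Strict Implicit. Unset Printing Implicit Defensive.

Section MixedGraphs.
Variable T : finType.

(* A mixed graph on vertex set T: undirected edges e (symmetric relation),
   directed arcs a ((u,v) with a u v). *)

Definition no_directed_cycle (a : rel T) : Prop :=
  forall (x : T) (p : seq T), path a x p -> last x p = x -> p = [::].

Definition mixed_graph (e a : rel T) : Prop :=
  [/\ symmetric e, irreflexive e, irreflexive a,
      (forall u v, e u v -> ~~ a u v) & no_directed_cycle a].

Definition dpath_ending (a : rel T) (i : nat) (v : T) : bool :=
  [exists x : T, exists t : i.-tuple T, path a x t && (last x t == v)].

Definition dpath_len (a : rel T) (i : nat) : bool :=
  [exists x : T, exists t : i.-tuple T, path a x t].

(* inrank: number of arcs of a longest directed path ending at v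
   (in a graph without directed cycles every path has < #|T| arcs) *)
Definition inrank (a : rel T) (v : T) : nat :=
  \max_(i < #|T| | dpath_ending a i v) i.

Definition maxrank (a : rel T) : nat :=
  \max_(i < #|T| | dpath_len a i) i.

Definition level (a : rel T) (i : nat) : {set T} :=
  [set v | inrank a v == i].

(* proper k-coloring of the mixed subgraph induced by S, colors 1..k
   (vertices outside S get the dummy value 0) *)
Definition colorable (e a : rel T) (S : {set T}) (k : nat) : bool :=
  [exists c : {ffun T -> 'I_k.+1},
    [forall u, (u \in S) ==> (0 < c u)] &&
    [forall u, forall v, ((u \in S) && (v \in S)) ==>
        ((e u v ==> (c u != c v)) && (a u v ==> (c u < c v)))]].

Definition ucolorable (e : rel T) (S : {set T}) (k : nat) : bool :=
  [exists c : {ffun T -> 'I_k.+1},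
    [forall u, (u \in S) ==> (0 < c u)] &&
    [forall u, forall v, ((u \in S) && (v \in S)) ==>
        (e u v ==> (c u != c v))]].

Definition is_chi (e a : rel T) (S : {set T}) (k : nat) : Prop :=
  colorable e a S k /\ forall j, colorable e a S j -> k <= j.

Definition is_chi_u (e : rel T) (S : {set T}) (k : nat) : Prop :=
  ucolorable e S k /\ forall j, ucolorable e S j -> k <= j.

End MixedGraphs.

(* Main.v *)
Require Import Defs.
From mathcomp Require Import all_boot.
From mathcomp Require Import zify.

Section Gen.
Variable T : finType.
Variable a : rel T.

Lemma path_rank (r : T -> nat) : (forall u v, a u v -> r u < r v) ->
  forall x p, path a x p -> r x + size p <= r (last x p).
Proof.
move=> H x p; elim: p x => [|y p IH] x /=; first by rewrite addn0.
case/andP => axy /IH; have := H _ _ axy; lia.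
Qed.

Lemma acyclic_uniq : no_directed_cycle a -> forall x p, path a x p -> uniq (x :: p).
Proof.
move=> Hc x p; elim: p x => [|y p IH] x //= /andP [axy Hp].
have := IH y Hp => /= ->; rewrite andbT.
have Hq : path a x (y :: p) by rewrite /= axy.
apply/negP => Hx.
move: (y :: p) Hq Hx => q Hq Hx.
case/splitPr: Hx Hq => p1 p2.
rewrite cat_path => /andP [H1 /= /andP [H2 _]].
have := Hc x (rcons p1 x).
rewrite rcons_path H1 H2 last_rcons => /(_ isT erefl).
by move/eqP; rewrite -size_eq0 size_rcons.
Qed.

Lemma path_size : no_directed_cycle a -> forall x p, path a x p -> size p < #|T|.
Proof.
move=> Hc x p Hp; have /card_uniqP := acyclic_uniq Hc x p Hp.
move=> E; have := max_card (mem (x :: p)); rewrite E /=; done.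
Qed.

Lemma dpath_endingP i v : reflect (exists x p, [/\ size p = i, path a x p & last x p = v])
  (dpath_ending a i v).
Proof.
apply: (iffP existsP) => [[x /existsP [t /andP [Hp /eqP Hl]]]|[x [p [Hs Hp Hl]]]].
  by exists x, t; rewrite size_tuple.
exists x; apply/existsP; have Hs' : size p == i by apply/eqP.
by exists (Tuple Hs'); rewrite /= Hp Hl eqxx.
Qed.

Lemma dpath_lenP i : reflect (exists x p, size p = i /\ path a x p) (dpath_len a i).
Proof.
apply: (iffP existsP) => [[x /existsP [t Hp]]|[x [p [Hs Hp]]]].
  by exists x, t; rewrite size_tuple.
exists x; apply/existsP; have Hs' : size p == i by apply/eqP.
by exists (Tuple Hs').
Qed.

Lemma dpath_ending0 v : dpath_ending a 0 v.
Proof. by apply/dpath_endingP; exists v, [::]. Qed.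

Lemma dpath_ending_ext i u v : dpath_ending a i u -> a u v -> dpath_ending a i.+1 v.
Proof.
case/dpath_endingP => x [p [Hs Hp Hl]] Huv; apply/dpath_endingP; exists x, (rcons p v).
by rewrite size_rcons rcons_path Hp Hl Huv last_rcons Hs.
Qed.

Lemma dpath_ending_len i v : dpath_ending a i v -> dpath_len a i.
Proof. by case/dpath_endingP => x [p [Hs Hp _]]; apply/dpath_lenP; exists x, p. Qed.

Hypothesis Hc : no_directed_cycle a.

Lemma inrank_ge i v : dpath_ending a i v -> i <= inrank a v.
Proof.
move=> H; have Hi : i < #|T| by case/dpath_endingP: H => x [p [<- Hp _]]; exact: path_size Hc x p Hp.
exact: (@leq_bigmax_cond _ (fun j : 'I_#|T| => dpath_ending a j v) (fun j => val j) (Ordinal Hi)).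
Qed.

Lemma inrank_dpath v : dpath_ending a (inrank a v) v.
Proof.
have H0 : 0 < #|T| by apply/card_gt0P; exists v.
have HA : 0 < #|[pred j : 'I_#|T| | dpath_ending a j v]|.
  by apply/card_gt0P; exists (Ordinal H0); rewrite inE /= dpath_ending0.
have [j Hj E] := @eq_bigmax_cond _ [pred j : 'I_#|T| | dpath_ending a j v] (fun j => val j) HA.
change (\max_(i < #|T| | dpath_ending a i v) val i = val j) in E.
by rewrite /inrank E; rewrite inE in Hj.
Qed.

Lemma inrank_arc u v : a u v -> inrank a u < inrank a v.
Proof. by move=> H; apply: inrank_ge; apply: dpath_ending_ext H; apply: inrank_dpath. Qed.

Lemma maxrank_ge i : dpath_len a i -> i <= maxrank a.
Proof.
move=> H; have Hi : i < #|T| by case/dpath_lenP: H => x [p [<- Hp]]; exact: path_size Hc x p Hp.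
exact: (@leq_bigmax_cond _ (fun j : 'I_#|T| => dpath_len a j) (fun j => val j) (Ordinal Hi)).
Qed.

Lemma maxrank_le n : (forall i, dpath_len a i -> i <= n) -> maxrank a <= n.
Proof. by move=> H; apply/bigmax_leqP => j /H. Qed.

Lemma inrank_le_maxrank v : inrank a v <= maxrank a.
Proof. by apply: maxrank_ge; apply: dpath_ending_len (inrank_dpath v). Qed.

End Gen.

Lemma part1 (T : finType) (e a : rel T) (chiG : nat) (chiL : nat -> nat) :
  mixed_graph e a -> is_chi e a [set: T] chiG ->
  (forall i, i <= maxrank a -> is_chi_u e (level a i) (chiL i)) ->
  chiG <= \sum_(i < (maxrank a).+1) chiL i.
Proof.
case=> _ _ _ _ Hc [_ Hmin] HL.
set M := maxrank a.
pose off n := \sum_(j < n) chiL j.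
pose g i u := if [pick c : {ffun T -> 'I_(chiL i).+1} |
   [forall u, (u \in level a i) ==> (0 < c u)] &&
   [forall u, forall v, ((u \in level a i) && (v \in level a i)) ==>
        (e u v ==> (c u != c v))]] is Some c then val (c u) else 0.
have Hg : forall i, i <= M -> (forall u, u \in level a i -> 0 < g i u <= chiL i) /\
   (forall u v, u \in level a i -> v \in level a i -> e u v -> g i u != g i v).
  move=> i Hi; rewrite /g; case: pickP => [c /andP [/forallP H1 /forallP H2]|Hn].
    split=> [u Hu|u v Hu Hv Huv].
      by rewrite leq_ord andbT; exact: (implyP (H1 u) Hu).
    by have := H2 u => /forallP /(_ v); rewrite Hu Hv Huv /= (inj_eq val_inj).
  exfalso; have [Hu _] := HL i Hi.
  by case/existsP: Hu => c Hc'; rewrite Hn in Hc'.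
pose col u := off (inrank a u) + g (inrank a u) u.
have Hlev u : u \in level a (inrank a u) by rewrite inE.
have HgU u : 0 < g (inrank a u) u <= chiL (inrank a u).
  by have [H _] := Hg _ (inrank_le_maxrank _ _ Hc u); apply: H.
have Hoff_mono m n : m <= n -> off m <= off n.
  move/subnK <-; elim: (n - m) => [|d IH] //.
  rewrite addSn [off (_.+1)]/off big_ord_recr /=.
  exact: leq_trans IH (leq_addr _ _).
have Hoff_succ i : off i.+1 = off i + chiL i by rewrite /off big_ord_recr.
have Hup u : col u <= off (inrank a u).+1.
  by rewrite Hoff_succ /col leq_add2l; case/andP: (HgU u).
have Hlt u v : inrank a u < inrank a v -> col u < col v.
  move=> H; apply: leq_ltn_trans (Hup u) _.
  apply: leq_ltn_trans (Hoff_mono _ _ H) _.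
  by rewrite /col -{1}(addn0 (off _)) ltn_add2l; case/andP: (HgU v).
have Hbound u : col u < (off M.+1).+1.
  rewrite ltnS; apply: leq_trans (Hup u) _; apply: Hoff_mono.
  by rewrite ltnS; apply: inrank_le_maxrank.
apply: (Hmin (off M.+1)).
move: (off M.+1) Hbound => N HN.
have Hcol u : nat_of_ord (inord (col u) : 'I_N.+1) = col u by exact: inordK.
apply/existsP.
exists [ffun u => (inord (col u) : 'I_N.+1)].
apply/andP; split.
  apply/forallP => u; apply/implyP => _; rewrite ffunE Hcol.
  by rewrite /col; case/andP: (HgU u) => H _; apply: leq_trans H (leq_addl _ _).
apply/forallP => u; apply/forallP => v; apply/implyP => _.
rewrite !ffunE; apply/andP; split; apply/implyP => Huv.
  rewrite -(inj_eq val_inj) /= !Hcol.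
  case: (ltngtP (inrank a u) (inrank a v)) => [H|H|H].
  - by rewrite neq_ltn (Hlt _ _ H).
  - by rewrite neq_ltn (Hlt _ _ H) orbT.
  rewrite /col H eqn_add2l.
  have [_ H2] := Hg _ (inrank_le_maxrank _ _ Hc v).
  by apply: H2 Huv; [rewrite -H|]; exact: Hlev.
rewrite !Hcol; apply: Hlt; exact: inrank_arc _ _ Hc _ _ Huv.
Qed.

Lemma inj_count (U : finType) j (f : U -> 'I_j.+1) :
  injective f -> (forall x, 0 < f x) -> #|U| <= j.
Proof.
move=> Hf Hp.
have : f @: [set: U] \subset [set~ ord0].
  apply/subsetP => _ /imsetP [x _ ->]; rewrite !inE.
  by rewrite -(inj_eq val_inj) /= -lt0n Hp.
by move/subset_leq_card; rewrite cardsC1 card_ord card_imset // cardsT.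
Qed.

Lemma part2 (l k : nat) : 1 <= l -> 1 <= k ->
  exists (T : finType) (e a : rel T),
    [/\ mixed_graph e a, maxrank a = l,
        (forall i, i <= l -> is_chi_u e (level a i) k)
      & is_chi e a [set: T] (l.+1 * k)].
Proof.
move=> Hl Hk.
pose U : finType := ('I_l.+1 * 'I_k)%type.
pose e : rel U := fun u v => (u.1 == v.1) && (u.2 != v.2).
pose a : rel U := fun u v => val u.1 < val v.1.
pose r := fun w : U => val w.1.
have Hr : forall u v, a u v -> r u < r v by [].
have Hc : no_directed_cycle a.
  move=> x p Hp Hl'; have H := path_rank _ _ r Hr x p Hp; rewrite Hl' in H.
  by case: p H {Hp Hl'} => //= y p; rewrite addnS ltnNge leq_addr.
have Hmg : mixed_graph e a.
  split => //.
  - by move=> u v; rewrite /e eq_sym (eq_sym u.2).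
  - by move=> u; rewrite /e !eqxx.
  - by move=> u; exact: ltnn.
  - by move=> u v /andP [/eqP Heq _]; rewrite /a Heq ltnn.
pose y0 : 'I_k := Ordinal Hk.
have Hend : forall i (Hi : i < l.+1) y, dpath_ending a i ((Ordinal Hi, y) : U).
  elim => [|i IH] Hi y; first exact: dpath_ending0.
  by apply: (dpath_ending_ext _ _ _ _ _ (IH (ltnW Hi) y0)); rewrite /a /=.
have Hinr : forall u : U, inrank a u = val u.1.
  move=> [[i Hi] y]; apply/eqP; rewrite eqn_leq; apply/andP; split.
    case/dpath_endingP: (inrank_dpath U a ((Ordinal Hi, y) : U)) => x [p [Hs Hp Hl']].
    have := path_rank _ _ _ Hr x p Hp; rewrite Hl' Hs /= => H.
    exact: leq_trans (leq_addl _ _) H.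
  exact: inrank_ge _ _ Hc _ _ (Hend _ Hi y).
have Hlev : forall i (u : U), (u \in level a i) = (val u.1 == i).
  by move=> i u; rewrite inE Hinr.
exists U, e, a; split => //.
- apply/eqP; rewrite eqn_leq; apply/andP; split.
    apply: maxrank_le => n /dpath_lenP [x [p [<- Hp]]].
    have := path_rank _ _ _ Hr x p Hp => H.
    have := ltn_ord (last x p).1; rewrite ltnS => H'.
    exact: leq_trans (leq_addl _ _) (leq_trans H H').
  exact: maxrank_ge _ _ Hc _ (dpath_ending_len _ _ _ _ (Hend l (ltnSn l) y0)).
- move=> i Hi; split.
    apply/existsP; exists [ffun u : U => (inord (val u.2).+1 : 'I_k.+1)].
    apply/andP; split.
      by apply/forallP => u; apply/implyP => _; rewrite ffunE inordK // ltnS ltn_ord.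
    apply/forallP => u; apply/forallP => v; apply/implyP => _; apply/implyP.
    move=> /andP [_ Hne]; rewrite !ffunE -(inj_eq val_inj) /= !inordK ?ltnS ?ltn_ord //.
  move=> j /existsP [c /andP [/forallP H1 /forallP H2]].
  rewrite -ltnS in Hi.
  have Hin y : ((Ordinal Hi, y) : U) \in level a i by rewrite Hlev.
  have := @inj_count 'I_k j (fun y => c (Ordinal Hi, y)).
  rewrite card_ord; apply.
    move=> y y' E; apply/eqP; apply: contraT => Hne.
    have := H2 (Ordinal Hi, y) => /forallP /(_ (Ordinal Hi, y')).
    by rewrite !Hin /e /= eqxx Hne /= E eqxx.
  by move=> y; exact: (implyP (H1 _) (Hin y)).
- split.
    apply/existsP; exists [ffun u : U => (inord (val u.1 * k + val u.2 + 1) : 'I_(l.+1 * k).+1)].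
    have Hb : forall (i : 'I_l.+1) (y : 'I_k), val i * k + val y + 1 < (l.+1 * k).+1.
      move=> [i Hi] [y Hy] /=; rewrite ltnS; nia.
    apply/andP; split.
      by apply/forallP => u; apply/implyP => _; rewrite ffunE inordK ?Hb // addn1.
    apply/forallP => u; apply/forallP => v; apply/implyP => _.
    rewrite !ffunE; apply/andP; split; apply/implyP.
      move: u v => [i y] [i' y']; rewrite /e /= => /andP [/eqP <- Hne].
      by rewrite -(inj_eq val_inj) /= !inordK ?Hb // eqn_add2r eqn_add2l (inj_eq val_inj).
    rewrite /a /= !inordK ?Hb //.
    move: u v => [[i Hi] [y Hy]] [[i' Hi'] [y' Hy']] /= H; nia.
  move=> j /existsP [c /andP [/forallP H1 /forallP H2]].
  have := @inj_count U j c; rewrite card_prod !card_ord; apply; last first.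
    by move=> u; exact: (implyP (H1 u)).
  move=> u v E; apply/eqP; apply: contraT => Hne.
  have := H2 u => /forallP /(_ v); rewrite !inE /= E eqxx ltnn /= !implybF.
  case/andP => Hne1 Hne2.
  have := H2 v => /forallP /(_ u); rewrite !inE /= E eqxx ltnn /= !implybF.
  case/andP => _ Hne3.
  have [Hlt|Hgt|Heq] := ltngtP (val u.1) (val v.1).
  - by move: Hne2; rewrite /a Hlt.
  - by move: Hne3; rewrite /a Hgt.
  move: Hne1; rewrite /e /= (val_inj Heq) eqxx /= negbK => /eqP H.
  move: Hne; move: u v Heq H {E Hne2 Hne3} => [? ?] [? ?] /= /val_inj -> ->.
  by rewrite eqxx.
Qed.

Theorem mainTheorem9 :
  (forall (T : finType) (e a : rel T) (chiG : nat) (chiL : nat -> nat),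
      mixed_graph e a ->
      is_chi e a [set: T] chiG ->
      (forall i, i <= maxrank a -> is_chi_u e (level a i) (chiL i)) ->
      chiG <= \sum_(i < (maxrank a).+1) chiL i)
  /\
  (forall l k : nat, 1 <= l -> 1 <= k ->
     exists (T : finType) (e a : rel T),
       [/\ mixed_graph e a,
           maxrank a = l,
           (forall i, i <= l -> is_chi_u e (level a i) k)
         & is_chi e a [set: T] (l.+1 * k)]).
Proof.
split; [exact: part1 | exact: part2].
Qed.
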